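(* Let $R=\prod_{i=1}^n R_i$ be a finite product of commutative rings. Then $R$ is an avoidance ring if and only if each $R_i$ is an avoidance ring.
   Context: All rings are commutative with $1\neq 0$. An ideal $I$ of a ring $R$ has avoidance if whenever $I_1,\ldots,I_n$ are finitely many ideals of $R$ with $I\subseteq\bigcup_{k=1}^n I_k$, then $I\subseteq I_k$ for some $k$. A ring is an avoidance ring if every ideal of it has avoidance. *)

(* Defs.v *)
From HB Require Import structures.
From mathcomp Require Import all_boot all_algebra.
Set Implicit Arguments. Unset Strict Implicit. Unset Printing Implicit Defensive.
Import GRing.Theory.
Local Open Scope ring_scope.

(* An ideal of a commutative ring: a subset containing 0, closed under
   addition and under multiplication by arbitrary ring elements
   (closure under negation follows, taking r = -1). Ideals are arbitrary
   (Prop-valued) subsets, not necessarily decidable or proper. *)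
Definition is_ideal (R : comPzRingType) (I : R -> Prop) : Prop :=
  [/\ I 0,
      (forall x y, I x -> I y -> I (x + y)) &
      (forall r x, I x -> I (r * x))].

Definition has_avoidance (R : comPzRingType) (I : R -> Prop) : Prop :=
  forall (m : nat) (J : 'I_m -> R -> Prop),
    (forall k, is_ideal (J k)) ->
    (forall x, I x -> exists k, J k x) ->
    exists k, forall x, I x -> J k x.

Definition avoidance_ring (R : comPzRingType) : Prop :=
  forall I : R -> Prop, is_ideal I -> has_avoidance I.

Section DProd.
Variables (n : nat) (R : 'I_n -> comNzRingType).

Definition dprod : Type := {dffun forall i : 'I_n, R i}.

HB.instance Definition _ := Choice.on dprod.

Definition dprod_zero : dprod := [ffun i => 0].
Definition dprod_opp (f : dprod) : dprod := [ffun i => - f i].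
Definition dprod_add (f g : dprod) : dprod := [ffun i => f i + g i].
Definition dprod_one : dprod := [ffun i => 1].
Definition dprod_mul (f g : dprod) : dprod := [ffun i => f i * g i].

Fact dprod_addA : associative dprod_add.
Proof. by move=> f g h; apply/ffunP=> i; rewrite !ffunE addrA. Qed.
Fact dprod_addC : commutative dprod_add.
Proof. by move=> f g; apply/ffunP=> i; rewrite !ffunE addrC. Qed.
Fact dprod_add0 : left_id dprod_zero dprod_add.
Proof. by move=> f; apply/ffunP=> i; rewrite !ffunE add0r. Qed.
Fact dprod_addN : left_inverse dprod_zero dprod_opp dprod_add.
Proof. by move=> f; apply/ffunP=> i; rewrite !ffunE addNr. Qed.

HB.instance Definition _ :=
  GRing.isZmodule.Build dprod dprod_addA dprod_addC dprod_add0 dprod_addN.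

Fact dprod_mulA : associative dprod_mul.
Proof. by move=> f g h; apply/ffunP=> i; rewrite !ffunE mulrA. Qed.
Fact dprod_mulC : commutative dprod_mul.
Proof. by move=> f g; apply/ffunP=> i; rewrite !ffunE mulrC. Qed.
Fact dprod_mul1 : left_id dprod_one dprod_mul.
Proof. by move=> f; apply/ffunP=> i; rewrite !ffunE mul1r. Qed.
Fact dprod_mulDl : left_distributive dprod_mul (@GRing.add dprod).
Proof. by move=> f g h; apply/ffunP=> i; rewrite !ffunE mulrDl. Qed.

HB.instance Definition _ :=
  GRing.Zmodule_isComPzRing.Build dprod dprod_mulA dprod_mulC dprod_mul1 dprod_mulDl.

End DProd.

Lemma dprod_addE n (R : 'I_n -> comNzRingType) (f g : dprod R) i :
  (f + g) i = f i + g i.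
Proof. by rewrite /GRing.add /= ffunE. Qed.
Lemma dprod_mulE n (R : 'I_n -> comNzRingType) (f g : dprod R) i :
  (f * g) i = f i * g i.
Proof. by rewrite /GRing.mul /= ffunE. Qed.
Lemma dprod_oneE n (R : 'I_n -> comNzRingType) i : (1 : dprod R) i = 1.
Proof. by rewrite /GRing.one /= ffunE. Qed.

(* Main.v *)
Require Import Defs.
From HB Require Import structures.
From mathcomp Require Import all_boot all_algebra.
From Stdlib Require Import Classical ClassicalEpsilon.
Set Implicit Arguments. Unset Strict Implicit. Unset Printing Implicit Defensive.
Import GRing.Theory.
Local Open Scope ring_scope.

Section Aux.
Variables (n : nat) (R : 'I_n -> comNzRingType).

Definition liftd (i : 'I_n) (x : R i) : dprod R :=
  [ffun j => dfwith (fun k => 0 : R k) x j].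

Lemma liftd_in i x : liftd x i = x.
Proof. by rewrite /liftd ffunE dfwith_in. Qed.

Lemma zeroE j : (0 : dprod R) j = 0.
Proof. by rewrite /GRing.zero /= ffunE. Qed.

Lemma sumE (I : Type) (r : seq I) (P : pred I) (F : I -> dprod R) j :
  (\sum_(i <- r | P i) F i) j = \sum_(i <- r | P i) F i j.
Proof.
by apply: (big_morph (fun f : dprod R => f j)) => [f g|]; rewrite ?dprod_addE ?zeroE.
Qed.

Definition edp (i : 'I_n) : dprod R := [ffun j => if i == j then 1 else 0].

Lemma edpE i j : edp i j = if i == j then 1 else 0.
Proof. by rewrite ffunE. Qed.

Unset Implicit Arguments.
Definition projI (I : dprod R -> Prop) (i : 'I_n) : R i -> Prop := fun y =>
  exists f, I f /\ f i = y.
Set Implicit Arguments.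

Lemma projI_ideal I i : is_ideal I -> is_ideal (projI I i).
Proof.
case=> I0 ID IM; split.
- by exists 0; split => //; rewrite zeroE.
- move=> x y [f [If <-]] [g [Ig <-]]; exists (f + g); split; first exact: ID.
  by rewrite dprod_addE.
- move=> r x [f [If <-]]; exists (liftd r * f); split; first exact: IM.
  by rewrite dprod_mulE liftd_in.
Qed.

Lemma ideal_sum (I : dprod R -> Prop) (g : 'I_n -> dprod R) :
  is_ideal I -> (forall i, I (g i)) -> I (\sum_i edp i * g i).
Proof.
case=> I0 ID IM Hg; apply: (big_ind I) => // i _; exact: IM.
Qed.

Lemma sum_eval (g : 'I_n -> dprod R) j : (\sum_i edp i * g i) j = g j j.
Proof.
rewrite sumE (bigD1 j) //= big1 ?addr0.
  by rewrite dprod_mulE edpE eqxx mul1r.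
by move=> i /negPf Hij; rewrite dprod_mulE edpE Hij mul0r.
Qed.

Lemma ideal_of_projI (J : dprod R -> Prop) (x : dprod R) :
  is_ideal J -> (forall i, projI J i (x i)) -> J x.
Proof.
move=> HJ H.
have [g Hg] : exists g : 'I_n -> dprod R, forall i, J (g i) /\ g i i = x i.
  exists (fun i => proj1_sig (constructive_indefinite_description _ (H i))).
  move=> i; exact: (proj2_sig (constructive_indefinite_description _ (H i))).
have -> : x = \sum_i edp i * g i.
  by apply/ffunP => j; rewrite sum_eval (proj2 (Hg j)).
by apply: ideal_sum => // i; case: (Hg i).
Qed.

End Aux.
Arguments projI {n R}.
Arguments edp {n R}.

Theorem theorem3p7 (n : nat) (R : 'I_n -> comNzRingType) :
  (0 < n)%N ->
  (avoidance_ring (dprod R) <-> (forall i : 'I_n, avoidance_ring (R i))).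
Proof.
move=> _; split.
- move=> HA i I HI m J HJ Hcov.
  have HI' : is_ideal (fun f : dprod R => I (f i)).
    case: HI => I0 ID IM; split; first by rewrite zeroE.
    + by move=> x y Hx Hy; rewrite dprod_addE; apply: ID.
    + by move=> r x Hx; rewrite dprod_mulE; apply: IM.
  have HJ' : forall k, is_ideal (fun f : dprod R => J k (f i)).
    move=> k; case: (HJ k) => J0 JD JM; split; first by rewrite zeroE.
    + by move=> x y Hx Hy; rewrite dprod_addE; apply: JD.
    + by move=> r x Hx; rewrite dprod_mulE; apply: JM.
  have [k Hk] := HA _ HI' m (fun k f => J k (f i)) HJ' (fun f Hf => Hcov _ Hf).
  exists k => x Hx; have := Hk (liftd x); rewrite liftd_in; exact.
- move=> HA I HI m J HJ Hcov.
  apply: NNPP => Hn.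
  have Hk : forall k, exists i, ~ (forall y, projI I i y -> projI (J k) i y).
    move=> k; apply: NNPP => Hk'.
    apply: Hn; exists k => x Hx; apply: ideal_of_projI => // i.
    apply: NNPP => Hni; apply: Hk'; exists i => Hall; apply: Hni; apply: Hall.
    by exists x.
  pose ik k := proj1_sig (constructive_indefinite_description _ (Hk k)).
  have Hik : forall k, ~ (forall y, projI I (ik k) y -> projI (J k) (ik k) y).
    move=> k; exact: (proj2_sig (constructive_indefinite_description _ (Hk k))).
  have Hi : forall i, exists g, I g /\ forall k, ik k = i -> ~ projI (J k) i (g i).
    move=> i.
    case: (classic (exists k0, ik k0 = i)) => [[k0 Hk0]|Hno]; last first.
      exists 0; split; first by case: HI.
      by move=> k Hki; exfalso; apply: Hno; exists k.
    pose sel k := if ik k == i then k else k0.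
    have Hsel : forall k, ik (sel k) = i.
      by move=> k; rewrite /sel; case: eqP.
    apply: NNPP => Hng.
    have Hcovi : forall y, projI I i y -> exists k, projI (J (sel k)) i y.
      move=> y Hy; apply: NNPP => Hny; apply: Hng.
      case: Hy => g [Ig Hgy]; exists g; split => // k Hki Hp.
      apply: Hny; exists k; rewrite /sel Hki eqxx -Hgy; exact: Hp.
    have [k Hk2] := HA i _ (projI_ideal i HI) m (fun k => projI (J (sel k)) i)
      (fun k => projI_ideal i (HJ (sel k))) Hcovi.
    apply: (Hik (sel k)); rewrite Hsel; exact: Hk2.
  pose G i := proj1_sig (constructive_indefinite_description _ (Hi i)).
  have HG : forall i, I (G i) /\ forall k, ik k = i -> ~ projI (J k) i (G i i).
    move=> i; exact: (proj2_sig (constructive_indefinite_description _ (Hi i))).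
  have Ia : I (\sum_i edp i * G i) := ideal_sum HI (fun i => proj1 (HG i)).
  have [k Jk] := Hcov _ Ia.
  apply: (proj2 (HG (ik k)) k (erefl (ik k))).
  exists (\sum_i edp i * G i); split; first exact: Jk.
  exact: (sum_eval G (ik k)).
Qed.
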